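(* Consider the algorithm described in the context applied to the problem described there. (i) If the algorithm terminates at iteration $k$ because $J_k^Tc_k=0$ and $c_k\neq 0$, then $x_k$ is an infeasible stationary point, i.e., $c_k\neq0$ and $J_k^Tc_k=0$. (ii) If the algorithm terminates at iteration $k$ because $s_k=0$, then $x_k$ is a first-order KKT point of the problem, i.e., $c(x_k)=0$ and there exist $y\in\mathbb{R}^m$ and $g_r\in\partial r(x_k)$ with $\nabla f(x_k)+g_r-J(x_k)^Ty=0$.
   Context: Problem: $\min_{x\in\mathbb{R}^n} f(x)+r(x)$ subject to $c(x)=0$, where $f:\mathbb{R}^n\to\mathbb{R}$ and $c:\mathbb{R}^n\to\mathbb{R}^m$ ($m\le n$) are continuously differentiable and $r:\mathbb{R}^n\to\mathbb{R}_{\ge 0}$ is convex. Write $g(x)=\nabla f(x)$, $J(x)=\nabla c(x)^T$, and $f_k=f(x_k)$, $g_k=g(x_k)$, $c_k=c(x_k)$, $J_k=J(x_k)$, $r_k=r(x_k)$. All norms are Euclidean. Algorithm: inputs $x_0$, $\alpha_0>0$, $\tau_{-1}>0$; constants $\kappa_v>0$, $\sigma_c,\epsilon_\tau,\xi,\eta\in(0,1)$, $\sigma_u\in(0,1/2]$, $\bar\sigma_u:=\sigma_u+\tfrac12$. For $k=0,1,\dots$: 1. If $J_k^Tc_k\ne0$, compute $v_k$ with $v_k\in\mathrm{Range}(J_k^T)$, $\|v_k\|_2\le\kappa_v\alpha_k\|J_k^Tc_k\|_2$, $\|c_k+J_kv_k\|_2\le\|c_k+J_kv_k^c\|_2$,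 where $v_k^c=-\beta_k^cJ_k^Tc_k$ with $\beta_k^c$ minimizing $\tfrac12\|c_k-\beta J_kJ_k^Tc_k\|_2^2$ over $0\le\beta\le\kappa_v\alpha_k$. Otherwise set $v_k=0$, and if $c_k\ne0$ terminate returning $x_k$. 2. Let $u_k$ be the unique minimizer of $g_k^Tu+\tfrac1{2\alpha_k}\|u\|_2^2+r(x_k+v_k+u)$ subject to $J_ku=0$; set $s_k=v_k+u_k$. If $s_k=0$, terminate returning $x_k$. 3. Let $D_k:=g_k^Ts_k+\bar\sigma_u\|s_k\|_2^2/\alpha_k+r(x_k+s_k)-r_k$; $\tau_{k,\mathrm{trial}}=\infty$ if $D_k\le0$, else $\tau_{k,\mathrm{trial}}=(1-\sigma_c)(\|c_k\|_2-\|c_k+J_kv_k\|_2)/D_k$. Set $\tau_k=\tau_{k-1}$ if $\tau_{k-1}\le\tau_{k,\mathrm{trial}}$, else $\tau_k=\min\{(1-\epsilon_\tau)\tau_{k-1},\tau_{k,\mathrm{trial}}\}$. 4. With $\Delta q_k(s,\tau):=-\tau(g_k^Ts+\tfrac1{2\alpha_k}\|s\|_2^2+r(x_k+s)-r_k)+\|c_k\|_2-\|c_k+J_ks\|_2$ and merit function $\Phi_\tau(x)=\tau(f(x)+r(x))+\|c(x)\|_2$: if $\Phi_{\tau_k}(x_k+s_k)\le\Phi_{\tau_k}(x_k)-\eta\Delta q_k(s_k,\tau_k)$ set $x_{k+1}=x_k+s_k$, $\alpha_{k+1}=\alpha_k$; else $x_{k+1}=x_k$, $\alpha_{k+1}=\xi\alpha_k$.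 Standing assumption: there is an open convex set $\mathcal X$ containing all iterates and trial points on which $f$ is bounded below, $\nabla f$ is bounded and Lipschitz, $c$ and $J$ are bounded, $J$ is Lipschitz, and the subdifferential of $r$ is bounded. *)

(* Defs.v *)
From mathcomp Require Import all_boot all_algebra.
From mathcomp Require Import all_classical all_reals all_analysis.
Set Implicit Arguments. Unset Strict Implicit. Unset Printing Implicit Defensive.
Import GRing.Theory Num.Theory.
Import numFieldNormedType.Exports.
Local Open Scope classical_set_scope.
Local Open Scope ring_scope.

Section Defs.
Variable R : realType.

Definition dot (p : nat) (u w : 'cV[R]_p) : R := (u^T *m w) 0 0.
Definition norm2 (p : nat) (w : 'cV[R]_p) : R := Num.sqrt (\sum_(i < p) w i 0 ^+ 2).

Definition convex_fun (p : nat) (r : 'cV[R]_p -> R) : Prop :=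
  forall (x y : 'cV[R]_p) (t : R), 0 <= t -> t <= 1 ->
    r ((1 - t) *: x + t *: y) <= (1 - t) * r x + t * r y.
Definition convex_set (p : nat) (X : set 'cV[R]_p) : Prop :=
  forall (x y : 'cV[R]_p) (t : R), X x -> X y -> 0 <= t -> t <= 1 ->
    X ((1 - t) *: x + t *: y).

Definition subdiff (p : nat) (r : 'cV[R]_p -> R) (x gr : 'cV[R]_p) : Prop :=
  forall y : 'cV[R]_p, r x + dot gr (y - x) <= r y.

Definition C1_grad (p : nat) (f : 'cV[R]_p -> R^o) (g : 'cV[R]_p -> 'cV[R]_p) : Prop :=
  (forall x : 'cV[R]_p, differentiable f x /\
     ('d f x : 'cV[R]_p -> R^o) = (fun h : 'cV[R]_p => dot (g x) h)) /\
  continuous g.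

Definition C1_jac (p q : nat) (c : 'cV[R]_p -> 'cV[R]_q)
    (J : 'cV[R]_p -> 'M[R]_(q, p)) : Prop :=
  (forall x : 'cV[R]_p, differentiable c x /\
     ('d c x : 'cV[R]_p -> 'cV[R]_q) = (fun h : 'cV[R]_p => J x *m h)) /\
  continuous J.

Section Algo.
Variables (n m : nat).
Variables (f : 'cV[R]_n -> R^o) (g : 'cV[R]_n -> 'cV[R]_n)
          (c : 'cV[R]_n -> 'cV[R]_m) (J : 'cV[R]_n -> 'M[R]_(m, n))
          (r : 'cV[R]_n -> R).

Definition JTc (x : 'cV[R]_n) : 'cV[R]_n := (J x)^T *m c x.

Definition step1_terminates (x : 'cV[R]_n) : Prop := JTc x = 0 /\ c x <> 0.

Definition v_spec (kappa_v alpha : R) (x v : 'cV[R]_n) : Prop :=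
  (JTc x <> 0 ->
     (exists w : 'cV[R]_m, v = (J x)^T *m w) /\
     norm2 v <= kappa_v * alpha * norm2 (JTc x) /\
     exists beta_c : R,
       0 <= beta_c /\ beta_c <= kappa_v * alpha /\
       (forall beta : R, 0 <= beta -> beta <= kappa_v * alpha ->
          (1/2) * norm2 (c x - beta *: (J x *m JTc x)) ^+ 2
          >= (1/2) * norm2 (c x - beta_c *: (J x *m JTc x)) ^+ 2) /\
       norm2 (c x + J x *m v) <= norm2 (c x + J x *m (- beta_c *: JTc x))) /\
  (JTc x = 0 -> v = 0).

Definition u_obj (alpha : R) (x v w : 'cV[R]_n) : R :=
  dot (g x) w + (1 / (2 * alpha)) * norm2 w ^+ 2 + r (x + v + w).
Definition u_spec (alpha : R) (x v u : 'cV[R]_n) : Prop :=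
  J x *m u = 0 /\
  (forall w : 'cV[R]_n, J x *m w = 0 -> u_obj alpha x v u <= u_obj alpha x v w) /\
  (forall w : 'cV[R]_n, J x *m w = 0 ->
     (forall w', J x *m w' = 0 -> u_obj alpha x v w <= u_obj alpha x v w') -> w = u).

Definition D_val (sigma_u alpha : R) (x s : 'cV[R]_n) : R :=
  dot (g x) s + (sigma_u + 1/2) * norm2 s ^+ 2 / alpha + r (x + s) - r x.
(* None encodes tau_trial = +infinity *)
Definition tau_trial (sigma_c sigma_u alpha : R) (x v s : 'cV[R]_n) : option R :=
  if D_val sigma_u alpha x s <= 0 then None
  else Some ((1 - sigma_c) * (norm2 (c x) - norm2 (c x + J x *m v))
             / D_val sigma_u alpha x s).
Definition tau_update (eps_tau tau_prev : R) (trial : option R) : R :=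
  match trial with
  | None => tau_prev
  | Some t => if tau_prev <= t then tau_prev
              else Num.min ((1 - eps_tau) * tau_prev) t
  end.

Definition delta_q (alpha tau : R) (x s : 'cV[R]_n) : R :=
  - tau * (dot (g x) s + (1 / (2 * alpha)) * norm2 s ^+ 2 + r (x + s) - r x)
  + norm2 (c x) - norm2 (c x + J x *m s).
Definition merit (tau : R) (x : 'cV[R]_n) : R := tau * (f x + r x) + norm2 (c x).
Definition step4_spec (eta xi alpha tau : R) (x s x' : 'cV[R]_n) (alpha' : R) : Prop :=
  if merit tau (x + s) <= merit tau x - eta * delta_q alpha tau x s
  then x' = x + s /\ alpha' = alpha
  else x' = x /\ alpha' = xi * alpha.

Definition KKT_point (x : 'cV[R]_n) : Prop :=
  c x = 0 /\
  exists (y : 'cV[R]_m) (gr : 'cV[R]_n),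
    subdiff r x gr /\ g x + gr - (J x)^T *m y = 0.

Definition infeasible_stationary (x : 'cV[R]_n) : Prop := c x <> 0 /\ JTc x = 0.

Definition standing (X : set 'cV[R]_n) : Prop :=
  open X /\ convex_set X /\
  (exists lb : R, forall x, X x -> lb <= f x) /\
  (exists B : R, forall x, X x -> norm2 (g x) <= B) /\
  (exists L : R, forall x y, X x -> X y -> norm2 (g x - g y) <= L * norm2 (x - y)) /\
  (exists B : R, forall x, X x -> norm2 (c x) <= B) /\
  (exists B : R, forall x h, X x -> norm2 (J x *m h) <= B * norm2 h) /\
  (exists L : R, forall x y h, X x -> X y ->
      norm2 ((J x - J y) *m h) <= L * norm2 (x - y) * norm2 h) /\
  (exists B : R, forall x gr, X x -> subdiff r x gr -> norm2 gr <= B).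

End Algo.
End Defs.

(* Main.v *)
Require Import Defs.
From mathcomp Require Import all_boot all_algebra.
From mathcomp Require Import all_classical all_reals all_analysis.
From mathcomp Require Import ring lra.
Import GRing.Theory Num.Theory.
Import order.Order.TTheory.
Import numFieldNormedType.Exports.
Local Open Scope classical_set_scope.
Local Open Scope ring_scope.
Set Implicit Arguments. Unset Strict Implicit.

Section Dot.
Variables (R : realType) (n : nat).
Implicit Types u w h : 'cV[R]_n.

Lemma dotE u w : dot u w = \sum_i u i 0 * w i 0.
Proof. by rewrite /dot mxE; apply: eq_bigr => i _; rewrite mxE. Qed.

Lemma dotC u w : dot u w = dot w u.
Proof. by rewrite !dotE; apply: eq_bigr => i _; rewrite mulrC. Qed.

Lemma dotDr h u w : dot h (u + w) = dot h u + dot h w.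
Proof. by rewrite !dotE -big_split; apply: eq_bigr => i _; rewrite mxE mulrDr. Qed.

Lemma dotZr h a u : dot h (a *: u) = a * dot h u.
Proof. by rewrite !dotE mulr_sumr; apply: eq_bigr => i _; rewrite mxE mulrCA. Qed.

Lemma dotNr h u : dot h (- u) = - dot h u.
Proof. by rewrite -scaleN1r dotZr mulN1r. Qed.

Lemma dotBr h u w : dot h (u - w) = dot h u - dot h w.
Proof. by rewrite dotDr dotNr. Qed.

Lemma dot0r h : dot h 0 = 0.
Proof. by rewrite dotE big1 // => i _; rewrite mxE mulr0. Qed.

Lemma dotDl h u w : dot (u + w) h = dot u h + dot w h.
Proof. by rewrite dotC dotDr !(dotC h). Qed.
Lemma dotZl h a u : dot (a *: u) h = a * dot u h.
Proof. by rewrite dotC dotZr dotC. Qed.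
Lemma dotBl h u w : dot (u - w) h = dot u h - dot w h.
Proof. by rewrite dotC dotBr !(dotC h). Qed.

Lemma msq_ge0 (x : R) : 0 <= x * x.
Proof. by rewrite -expr2 sqr_ge0. Qed.

Lemma dot_ge0 u : 0 <= dot u u.
Proof. by rewrite dotE sumr_ge0 // => i _; rewrite msq_ge0. Qed.

Lemma dot_eq0 u : dot u u = 0 -> u = 0.
Proof.
rewrite dotE => H; apply/matrixP => i j; rewrite (ord1 j) mxE.
have := @psumr_eq0P _ _ xpredT (fun i => u i 0 * u i 0) (fun i _ => msq_ge0 (u i 0)) H i isT.
by move/eqP; rewrite mulf_eq0 orbb => /eqP.
Qed.

Lemma norm2_sq u : norm2 u ^+ 2 = dot u u.
Proof.
rewrite /norm2 sqr_sqrtr; last by rewrite sumr_ge0 // => i _; rewrite sqr_ge0.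
by rewrite dotE; apply: eq_bigr => i _; rewrite expr2.
Qed.

Lemma norm2_ge0 u : 0 <= norm2 u.
Proof. exact: sqrtr_ge0. Qed.

End Dot.

Section HB.
Variables (R : realType) (n : nat).
Variable phi : 'cV[R]_n -> R.
Hypothesis Hphi : convex_fun phi.

Lemma hb_step (A : 'M[R]_n) (h e : 'cV[R]_n) :
  (forall w, (w^T <= A)%MS -> dot h w <= phi w) -> ~~ (e^T <= A)%MS ->
  exists h', (forall w, (w^T <= A)%MS -> dot h' w = dot h w) /\
             (forall w, (w^T <= A + e^T)%MS -> dot h' w <= phi w).
Proof.
move=> Hh He.
have [q [Hq1 Hq2]] : exists q, (forall s, (s^T <= A)%MS -> dot s q = 0) /\ dot e q = 1.
  move: He; rewrite submxE => Hne.
  have [j Hj] : exists j, (e^T *m cokermx A) 0 j != 0.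
    case: (pselect (exists j, (e^T *m cokermx A) 0 j != 0)) => // Hn.
    exfalso; move/eqP: Hne; apply; apply/matrixP => i j; rewrite (ord1 i) [RHS]mxE.
    by case: (eqVneq ((e^T *m cokermx A) 0 j) 0) => // Hc; exfalso; apply: Hn; exists j.
  pose q0 := col j (cokermx A).
  have dq0 : forall s, dot s q0 = (s^T *m cokermx A) 0 j.
    by move=> s; rewrite /dot /q0 colE mulmxA -colE mxE.
  exists ((dot e q0)^-1 *: q0); split.
  - move=> s Hs; rewrite dotZr (dq0 s); move: Hs; rewrite submxE => /eqP ->.
    by rewrite mxE mulr0.
  - by rewrite dotZr mulVf // dq0.
pose L := [set y | exists s a, (s^T <= A)%MS /\ 0 < a /\
                      y = (dot h s - phi (s - a *: e)) / a].
have cross : forall s s' a b, (s^T <= A)%MS -> (s'^T <= A)%MS -> 0 < a -> 0 < b ->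
    (dot h s' - phi (s' - a *: e)) / a <= (phi (s + b *: e) - dot h s) / b.
  move=> s s' a b Hs Hs' Ha Hb.
  have Hab : 0 < a + b by rewrite addr_gt0.
  have Hab0 : a + b != 0 by rewrite gt_eqF.
  pose t := b / (a + b).
  have t0 : 0 <= t by rewrite /t divr_ge0 // ltW.
  have t1 : t <= 1 by rewrite /t ler_pdivrMr // mul1r lerDr ltW.
  have Ez : (1 - t) *: (s + b *: e) + t *: (s' - a *: e)
            = (a + b)^-1 *: (a *: s + b *: s').
    apply/matrixP => i j; rewrite !mxE /t; field; exact: Hab0.
  have Hz : (((a + b)^-1 *: (a *: s + b *: s'))^T <= A)%MS.
    rewrite !linearZ /= linearD /= !linearZ /=.
    by apply: scalemx_sub; apply: addmx_sub; apply: scalemx_sub.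
  have H1 := Hh _ Hz.
  have H2 := @Hphi (s + b *: e) (s' - a *: e) t t0 t1.
  rewrite Ez in H2.
  rewrite dotZr dotDr !dotZr in H1.
  have H3 : a * dot h s + b * dot h s' <= a * phi (s + b *: e) + b * phi (s' - a *: e).
    have Hk : 0 < (a + b)^-1 by rewrite invr_gt0.
    rewrite -(ler_pM2l Hk).
    have -> : (a + b)^-1 * (a * phi (s + b *: e) + b * phi (s' - a *: e))
              = (1 - t) * phi (s + b *: e) + t * phi (s' - a *: e).
      by rewrite /t; field.
    exact: le_trans H1 H2.
  rewrite ler_pdivlMr // mulrAC ler_pdivrMr //.
  nra.
pose gam := sup L.
have L0 : L !=set0.
  by exists ((dot h 0 - phi (0 - 1 *: e)) / 1); exists 0, 1; rewrite linear0 sub0mx.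
have Lub : ubound L ((phi (0 + 1 *: e) - dot h 0) / 1).
  move=> y [s [a [Hs [Ha ->]]]]; apply: cross => //; by rewrite linear0 sub0mx.
have Hg1 : forall s b, (s^T <= A)%MS -> 0 < b -> gam <= (phi (s + b *: e) - dot h s) / b.
  move=> s b Hs Hb; apply: ge_sup => //.
  move=> y [s' [a [Hs' [Ha ->]]]]; exact: cross.
have Hg2 : forall s a, (s^T <= A)%MS -> 0 < a -> (dot h s - phi (s - a *: e)) / a <= gam.
  move=> s a Hs Ha; apply: sup_upper_bound; first by split => //; exists ((phi (0 + 1 *: e) - dot h 0) / 1).
  by exists s, a.
exists (h + (gam - dot h e) *: q); split.
  by move=> w Hw; rewrite dotDl dotZl (dotC q w) Hq1 // mulr0 addr0.
move=> w /sub_addsmxP [u Hw].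
rewrite (mx11_scalar u.2) mul_scalar_mx in Hw.
set s := (u.1 *m A)^T; set t := u.2 0 0.
have Ew : w = s + t *: e.
  by rewrite -[w]trmxK Hw linearD /= linearZ /= trmxK.
have Hs : (s^T <= A)%MS by rewrite trmxK submxMl.
have Edot : dot (h + (gam - dot h e) *: q) w = dot h s + t * gam.
  rewrite Ew dotDr dotZr !dotDl !dotZl (dotC q s) Hq1 // (dotC q e) Hq2; ring.
rewrite Edot Ew.
case: (ltgtP t 0) => Ht.
- have Ha : 0 < - t by rewrite oppr_gt0.
  have := Hg2 s (- t) Hs Ha.
  rewrite scaleNr opprK ler_pdivrMr //. nra.
- have := Hg1 s t Hs Ht; rewrite ler_pdivlMr //. nra.
- by rewrite Ht mul0r addr0 scale0r addr0; apply: Hh.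
Qed.

End HB.

Section HB2.
Variables (R : realType) (n : nat).
Variable phi : 'cV[R]_n -> R.
Hypothesis Hphi : convex_fun phi.

Lemma hb_full d : forall (A : 'M[R]_n) (h : 'cV[R]_n), (n - \rank A <= d)%N ->
  (forall w, (w^T <= A)%MS -> dot h w <= phi w) ->
  exists h', (forall w, (w^T <= A)%MS -> dot h' w = dot h w) /\
             (forall w, dot h' w <= phi w).
Proof.
elim: d => [|d IH] A h Hd Hh; case: (boolP (row_full A)) => HA.
- by exists h; split => // w; apply: Hh; apply: submx_full.
- exfalso; move/negP: HA; apply; rewrite /row_full eqn_leq rank_leq_col /=.
  by rewrite -subn_eq0 -leqn0.
- by exists h; split => // w; apply: Hh; apply: submx_full.
- have : ~~ (1%:M <= A)%MS by rewrite sub1mx.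
  move/row_subPn => [i Hi].
  pose e := (row i (1%:M : 'M[R]_n))^T.
  have He : ~~ (e^T <= A)%MS by rewrite /e trmxK.
  have [h1 [H1a H1b]] := hb_step Hphi Hh He.
  have Hlt : (\rank A < \rank (A + e^T)%MS)%N.
    apply: rank_ltmx; rewrite ltmxE addsmxSl /=.
    by apply: contra He => H; apply: submx_trans (addsmxSr A _) H.
  have Hd' : (n - \rank (A + e^T)%MS <= d)%N.
    have := rank_leq_col (A + e^T)%MS.
    move: Hd Hlt; set r1 := \rank A; set r2 := \rank _ => Hd Hlt Hr2.
    rewrite leq_subLR; rewrite leq_subLR in Hd.
    by apply: leq_trans Hd _; rewrite addnS ltn_add2r.
  have [h2 [H2a H2b]] := IH _ h1 Hd' H1b.
  exists h2; split => // w Hw.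
  rewrite H2a ?H1a //; apply: submx_trans Hw (addsmxSl _ _).
Qed.

End HB2.

Lemma kkt_sub (R : realType) (n m : nat) (phi : 'cV[R]_n -> R) (Hphi : convex_fun phi)
  (J : 'M[R]_(m, n)) :
  (forall w, J *m w = 0 -> 0 <= phi w) ->
  exists y : 'cV[R]_m, forall w, dot (J^T *m y) w <= phi w.
Proof.
move=> H0.
have d0 : forall w : 'cV[R]_n, dot w 0 = 0 by move=> w; rewrite /dot mulmx0 mxE.
pose A0 := kermx (J^T).
have HA0 : forall w : 'cV[R]_n, (w^T <= A0)%MS -> J *m w = 0.
  move=> w Hw0; have Hw := elimT (@mxalgebra.sub_kermxP _ _ _ _ _ _) Hw0.
  by rewrite -[J *m w]trmxK trmx_mul Hw trmx0.
have Hz : forall w : 'cV[R]_n, (w^T <= A0)%MS -> dot (0 : 'cV[R]_n) w <= phi w.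
  move=> w Hw; rewrite dotC (_ : dot w 0 = 0); last by rewrite /dot mulmx0 mxE.
  by apply: H0; apply: HA0.
have [h [Ha Hb]] := @hb_full R n phi Hphi n A0 0 (leq_subr _ _) Hz.
have Hsub : (h^T <= J)%MS.
  rewrite submxE; apply/eqP/matrixP => i j; rewrite (ord1 i) [RHS]mxE.
  pose w := col j (cokermx J).
  have Jw : J *m w = 0 by rewrite /w colE mulmxA mulmx_coker mul0mx.
  have Hw : (w^T <= A0)%MS by apply: (introT (@mxalgebra.sub_kermxP _ _ _ _ _ _)); rewrite -trmx_mul Jw trmx0.
  have := Ha w Hw; rewrite [dot 0 w]dotC d0 /dot /w colE mulmxA -colE mxE.
  by [].
exists (h^T *m pinvmx J)^T => w.
by rewrite -[J]trmxK -trmx_mul trmxK (mulmxKpV Hsub) trmxK; apply: Hb.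
Qed.

Lemma scale_nonneg (R : realType) (n : nat) (phi : 'cV[R]_n -> R) (Hphi : convex_fun phi)
  (w : 'cV[R]_n) (K : R) : 0 <= K -> phi 0 = 0 ->
  (forall t, 0 < t -> t <= 1 -> 0 <= phi (t *: w) + t ^+ 2 * K) -> 0 <= phi w.
Proof.
move=> HK H0 Ht.
case: (lerP 0 (phi w)) => // Hneg; exfalso.
pose t := Num.min 1 (- phi w / (2 * (K + 1))).
have HK1 : 0 < 2 * (K + 1) by rewrite mulr_gt0 // ltr_wpDl.
have tpos : 0 < t.
  by rewrite /t lt_min ltr01 /= divr_gt0 // oppr_gt0.
have t1 : t <= 1 by rewrite /t ge_min lexx.
have t2 : t * (2 * (K + 1)) <= - phi w.
  by rewrite -ler_pdivlMr // /t ge_min lexx orbT.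
have Hc := @Hphi 0 w t (ltW tpos) t1.
rewrite scaler0 add0r H0 mulr0 add0r in Hc.
have := Ht t tpos t1.
move=> H.
have H2 : 0 <= t * phi w + t ^+ 2 * K by apply: le_trans H _; rewrite lerD2r.
have H3 : 0 <= phi w + t * K.
  have : 0 <= t * (phi w + t * K) by rewrite mulrDr mulrA -expr2.
  by rewrite pmulr_rge0.
nra.
Qed.

Theorem theorem3p2 (R : realType) (n m : nat) (hmn : (m <= n)%N)
  (f : 'cV[R]_n -> R^o) (g : 'cV[R]_n -> 'cV[R]_n)
  (c : 'cV[R]_n -> 'cV[R]_m) (J : 'cV[R]_n -> 'M[R]_(m, n))
  (r : 'cV[R]_n -> R)
  (Hf : C1_grad f g) (Hc : C1_jac c J)
  (Hr0 : forall x, 0 <= r x) (Hrc : convex_fun r)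
  (x0 : 'cV[R]_n) (alpha0 tau_m1 kappa_v sigma_c eps_tau xi eta sigma_u : R)
  (Halpha0 : 0 < alpha0) (Htau_m1 : 0 < tau_m1) (Hkappa : 0 < kappa_v)
  (Hsc : 0 < sigma_c < 1) (Heps : 0 < eps_tau < 1) (Hxi : 0 < xi < 1)
  (Heta : 0 < eta < 1) (Hsu : 0 < sigma_u <= 1/2)
  (x v u : nat -> 'cV[R]_n) (alpha tau : nat -> R) (k : nat)
  (X : set 'cV[R]_n)
  (Hx0 : x 0%N = x0) (Ha0 : alpha 0%N = alpha0)
  (* step 1 performed at every iteration j <= k *)
  (Hv : forall j, (j <= k)%N -> v_spec c J kappa_v (alpha j) (x j) (v j))
  (* iterations j < k ran to completion without terminating *)
  (Hrun : forall j, (j < k)%N ->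
     ~ step1_terminates c J (x j) /\
     u_spec g J r (alpha j) (x j) (v j) (u j) /\
     v j + u j <> 0 /\
     tau j = tau_update eps_tau (if j is j'.+1 then tau j' else tau_m1)
               (tau_trial g c J r sigma_c sigma_u (alpha j) (x j) (v j) (v j + u j)) /\
     step4_spec f g c J r eta xi (alpha j) (tau j) (x j) (v j + u j)
       (x j.+1) (alpha j.+1))
  (* standing assumption: X contains all iterates and trial points *)
  (HX : standing f g c J r X)
  (HXx : forall j, (j <= k)%N -> X (x j))
  (HXt : forall j, (j < k)%N -> X (x j + (v j + u j))) :
  (* (i) termination in step 1 *)
  (step1_terminates c J (x k) -> infeasible_stationary c J (x k)) /\
  (* (ii) termination in step 2 because s_k = 0 *)
  (~ step1_terminates c J (x k) ->
   u_spec g J r (alpha k) (x k) (v k) (u k) ->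
   X (x k + (v k + u k)) ->
   v k + u k = 0 ->
   KKT_point g c J r (x k)).
Proof.
split.
  by move=> [H1 H2]; split.
move=> Hnt Hu HXs Hs.
have Hapos : forall j, (j <= k)%N -> 0 < alpha j.
  elim => [|j IH] Hj; first by rewrite Ha0.
  have [_ [_ [_ [_ H4]]]] := Hrun j Hj.
  move: H4; rewrite /step4_spec; case: ifP => _ [_ ->].
    by apply: IH; apply: ltnW.
  case/andP: Hxi => Hxi0 _.
  by rewrite mulr_gt0 // IH // ltnW.
have Hak := Hapos k (leqnn k).
have Hv' := Hv k (leqnn k).
have [Ju [Hmin _]] := Hu.
have Ev : v k = - u k by apply/eqP; rewrite -addr_eq0 Hs.
have Jv : J (x k) *m v k = 0 by rewrite Ev mulmxN Ju oppr0.
have HJ : JTc c J (x k) = 0.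
  case: (eqVneq (JTc c J (x k)) 0) => // Hne; exfalso.
  have Hne' : JTc c J (x k) <> 0 by apply/eqP.
  have [_ [_ [bc [Hb0 [Hb1 [Hbmin Hbv]]]]]] := Hv'.1 Hne'.
  rewrite Jv addr0 in Hbv.
  move: Hbmin Hbv.
  set a := JTc c J (x k); set cc := c (x k).
  have -> : J (x k) *m (- bc *: a) = - (bc *: (J (x k) *m a)) by rewrite -scalemxAr scaleNr.
  set d := J (x k) *m a.
  move=> Hbmin Hbv.
  have sq : forall b, norm2 (cc - b *: d) ^+ 2 = dot cc cc - 2 * b * dot cc d + b ^+ 2 * dot d d.
    move=> b; rewrite norm2_sq dotBl !dotBr !dotZl !dotZr (dotC d cc); ring.
  have Ecd : dot cc d = dot a a.
    by rewrite /dot /d /a /JTc trmx_mul trmxK !mulmxA.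
  have Pge := dot_ge0 a.
  have Pne : dot a a != 0 by apply/eqP => /dot_eq0.
  have Ppos : 0 < dot a a by rewrite lt_def Pne Pge.
  have Qge := dot_ge0 d.
  have HQ1 : 0 < dot d d + 1 by rewrite ltr_wpDl.
  case/andP: Hsc => _ _.
  have Hka : 0 < kappa_v * alpha k by rewrite mulr_gt0.
  pose be := Num.min (kappa_v * alpha k) (dot a a / (dot d d + 1)).
  have bpos : 0 < be by rewrite /be lt_min Hka /= divr_gt0.
  have b1 : be <= kappa_v * alpha k by rewrite /be ge_min lexx.
  have b2 : be * (dot d d + 1) <= dot a a.
    by rewrite -ler_pdivlMr // /be ge_min lexx orbT.
  have := Hbmin be (ltW bpos) b1.
  rewrite !sq Ecd -(norm2_sq cc) => H.
  have n0 := norm2_ge0 cc.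
  have n1 := norm2_ge0 (cc - bc *: d).
  have Hsq : norm2 cc ^+ 2 <= norm2 (cc + - (bc *: d)) ^+ 2.
    by rewrite lerXn2r // nnegrE.
  rewrite sq Ecd -(norm2_sq cc) in Hsq.
  have H6 : be * (be * dot d d) <= be * (dot a a - be).
    by rewrite ler_pM2l //; lra.
  nra.
have Hc0 : c (x k) = 0.
  case: (eqVneq (c (x k)) 0) => // Hcne; exfalso; apply: Hnt; split => //.
  exact/eqP.
have Hv0 : v k = 0 by apply: Hv'.2.
have Hu0 : u k = 0 by apply/eqP; rewrite -oppr_eq0 -Ev Hv0.
split => //.
have d0 : forall w : 'cV[R]_n, dot w 0 = 0 by move=> w; rewrite /dot mulmx0 mxE.
pose xk := x k.
pose phi := fun w : 'cV[R]_n => r (xk + w) - r xk + dot (g xk) w.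
have Hphi : convex_fun phi.
  move=> y z t t0 t1.
  have E : xk + ((1 - t) *: y + t *: z) = (1 - t) *: (xk + y) + t *: (xk + z).
    by apply/matrixP => i j; rewrite !mxE; ring.
  rewrite /phi E dotDr !dotZr.
  have := Hrc (xk + y) (xk + z) t t0 t1.
  lra.
have phi0 : phi 0 = 0 by rewrite /phi addr0 d0 subrr addr0.
have nrm0 : norm2 (0 : 'cV[R]_n) = 0.
  by rewrite /norm2 big1 ?sqrtr0 // => i _; rewrite mxE expr0n.
have Hker : forall w, J xk *m w = 0 -> 0 <= phi w.
  move=> w Jw.
  apply: (@scale_nonneg R n phi Hphi w (1 / (2 * alpha k) * norm2 w ^+ 2)) => //.
    by rewrite mulr_ge0 // ?divr_ge0 // ?sqr_ge0 // mulr_ge0 // ltW.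
  move=> t t0 t1.
  have Jtw : J xk *m (t *: w) = 0 by rewrite -scalemxAr Jw scaler0.
  have := Hmin _ Jtw.
  rewrite /u_obj Hv0 Hu0 d0 nrm0 !addr0 expr0n /= mulr0 add0r.
  rewrite /phi (_ : norm2 (t *: w) ^+ 2 = t ^+ 2 * norm2 w ^+ 2).
    rewrite -/xk; lra.
  by rewrite !norm2_sq dotZl dotZr mulrA expr2.
have [y Hy] := kkt_sub Hphi Hker.
exists y, ((J xk)^T *m y - g xk); split.
  move=> z; have := Hy (z - xk).
  rewrite /phi [xk + (z - xk)]addrC subrK dotBl.
  lra.
by rewrite addrCA subrr addr0 subrr.
Qed.
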